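(* Fix integers $t\geq 1$ and $r\geq 1$. Then, as $m\to\infty$ (with $m\geq r$), \[ R_t(r,m) \leq \left(1-\frac{1}{2^t}\right)2^m-\frac{\sqrt{2^t-1}}{2^t} (1+\sqrt{2})^{r-1}2^{m/2}+O(m^{r-2}), \] where the constant in the $O(\cdot)$ term may depend on $r$ and $t$.
   Context: For a $t\times n$ matrix $\mathbf{v}$ over $\mathbb{F}_q$ with rows $\overline{v}_1,\dots,\overline{v}_t$, its $t$-weight is $\mathrm{wt}^{(t)}(\mathbf{v})=\left|\bigcup_{i=1}^t \mathrm{supp}(\overline{v}_i)\right|$, and $d^{(t)}(\mathbf{u},\mathbf{v})=\mathrm{wt}^{(t)}(\mathbf{u}-\mathbf{v})$. For a linear code $C\subseteq\mathbb{F}_q^n$ and $t\in\mathbb{N}$, let $C^t$ be the set of $t\times n$ matrices all of whose rows lie in $C$. The $t$-th generalized covering radius $R_t(C)$ is the smallest integer $\rho$ such that for every $\mathbf{v}\in\mathbb{F}_q^{t\times n}$ there is $\mathbf{c}\in C^t$ with $d^{(t)}(\mathbf{v},\mathbf{c})\leq \rho$. Binary Reed–Muller codes $\mathrm{RM}(r,m)\subseteq\mathbb{F}_2^{2^m}$ ($0\le r\le m$) are defined recursively: $\mathrm{RM}(0,m)=\{\overline{0},\overline{1}\}$ (the repetition code of length $2^m$), $\mathrm{RM}(m,m)=\mathbb{F}_2^{2^m}$, and for $1\leq r\leq m-1$, $\mathrm{RM}(r,m)=\{(\overline{u},\overline{u}+\overline{v}) : \overline{u}\in \mathrm{RM}(r,m-1),\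 \overline{v}\in\mathrm{RM}(r-1,m-1)\}$. It is a linear code of length $2^m$ and dimension $\sum_{i=0}^r\binom{m}{i}$. Write $R_t(r,m)=R_t(\mathrm{RM}(r,m))$. *)

(* Defs.v *)
From HB Require Import structures.
From mathcomp Require Import all_boot all_order all_algebra.
From mathcomp Require Import reals.
Set Implicit Arguments. Unset Strict Implicit. Unset Printing Implicit Defensive.
Import Order.TTheory GRing.Theory Num.Theory.
Local Open Scope ring_scope.

Fixpoint all_words (n : nat) : seq (seq 'F_2) :=
  match n with
  | 0 => [:: [::]]
  | n'.+1 => [seq a :: w | a <- enum 'F_2, w <- all_words n']
  end.

Definition uuv (u v : seq 'F_2) : seq 'F_2 :=
  u ++ [seq x.1 + x.2 | x <- zip u v].

(* rm_code m r = list of codewords of RM(r,m) (length 2^m), by the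
   recursive definition of the paper:
   RM(0,m) = {0,1}, RM(m,m) = F_2^(2^m) (also used for r >= m),
   RM(r,m) = {(u,u+v) : u in RM(r,m-1), v in RM(r-1,m-1)} for 1<=r<=m-1. *)
Fixpoint rm_code (m r : nat) : seq (seq 'F_2) :=
  match m with
  | 0 => [:: [:: 0]; [:: 1]]
  | m'.+1 =>
    match r with
    | 0 => [:: nseq (2 ^ m'.+1)%N 0; nseq (2 ^ m'.+1)%N 1]
    | r'.+1 =>
      if (m' <= r')%N then all_words (2 ^ m'.+1)
      else [seq uuv u v | u <- rm_code m' r, v <- rm_code m' r']
    end
  end.

Definition RM (r m : nat) : {set 'rV['F_2]_(2 ^ m)} :=
  [set w : 'rV['F_2]_(2 ^ m) | [seq w ord0 j | j <- enum 'I_(2 ^ m)] \in rm_code m r].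

Definition wt_t (t n : nat) (v : 'M['F_2]_(t, n)) : nat :=
  #|[set j : 'I_n | [exists i : 'I_t, v i j != 0]]|.

Definition d_t (t n : nat) (u v : 'M['F_2]_(t, n)) : nat := wt_t (u - v).

(* The disjunct (n <= rho)
   only guarantees existence of a minimum; it does not change the minimum
   for nonempty C (e.g. linear codes), since then rho = n already covers. *)
Definition cov_pred (t n : nat) (C : {set 'rV['F_2]_n}) : pred nat :=
  fun rho => (n <= rho)%N ||
    [forall v : 'M['F_2]_(t, n), [exists c : 'M['F_2]_(t, n),
        [forall i : 'I_t, row i c \in C] && (d_t v c <= rho)%N]].

Lemma cov_pred_ex (t n : nat) (C : {set 'rV['F_2]_n}) :
  exists rho, cov_pred t C rho.
Proof. by exists n; rewrite /cov_pred leqnn. Qed.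

Definition gen_cov_radius (t n : nat) (C : {set 'rV['F_2]_n}) : nat :=
  ex_minn (cov_pred_ex t C).

Definition R_t_RM (t r m : nat) : nat := gen_cov_radius t (RM r m).

(* Main.v *)
Require Import Defs.
From HB Require Import structures.
From mathcomp Require Import all_boot all_order all_algebra.
From mathcomp Require Import reals.
From mathcomp Require Import lra ring.
Import Order.TTheory GRing.Theory Num.Theory.
Set Implicit Arguments. Unset Strict Implicit. Unset Printing Implicit Defensive.

Lemma F2_cases (x : 'F_2) : x = 0%R \/ x = 1%R.
Proof. by case: x => [[|[|//]]] ?; [left|right]; apply/val_inj. Qed.

Lemma size_all_words n s : s \in all_words n -> size s = n.
Proof.
elim: n s => [|n IH] s /=; first by rewrite inE => /eqP ->.
by case/allpairsP => [[a w] [_ /= /IH Hw ->]] /=; rewrite Hw.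
Qed.

Lemma all_wordsP n s : size s = n -> s \in all_words n.
Proof.
elim: n s => [|n IH] [|a s] //=; idtac.
case=> Hs; apply: (allpairs_f (fun a w => a :: w)); first by rewrite mem_enum.
exact: IH.
Qed.

Lemma size_uuv u v : size u = size v -> size (uuv u v) = (size u + size u)%N.
Proof. by move=> H; rewrite /uuv size_cat size_map size1_zip ?H. Qed.

Lemma size_rm m r s : s \in rm_code m r -> size s = (2 ^ m)%N.
Proof.
elim: m r s => [|m IH] r s /=; first by rewrite !inE => /orP[] /eqP ->.
case: r => [|r]; first by rewrite !inE => /orP[] /eqP ->; rewrite size_nseq.
case: ifP => _; first exact: size_all_words.
case/allpairsP => [[u v] [/= /IH Hu /IH Hv ->]].
by rewrite size_uuv ?Hu ?Hv // expnS mul2n addnn.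
Qed.

Lemma rm_full r s : (1 <= r)%N -> size s = (2 ^ r)%N -> s \in rm_code r r.
Proof.
case: r => [//|r] _ Hs /=; rewrite leqnn; exact: all_wordsP.
Qed.

Lemma rmS m r : (r < m)%N -> rm_code m.+1 r.+1 =
  [seq uuv u v | u <- rm_code m r.+1, v <- rm_code m r].
Proof. by move=> H; rewrite [LHS]/= leqNgt H. Qed.

Lemma rm0 m : rm_code m.+1 0 = [:: nseq (2 ^ m.+1) 0%R; nseq (2 ^ m.+1) 1%R].
Proof. by []. Qed.

Local Open Scope ring_scope.

Definition dist t n (a s : 'I_t -> seq 'F_2) : nat :=
  count (fun j => [exists i, nth 0%R (a i) j != nth 0%R (s i) j]) (iota 0 n).

Definition CoversS (R : realType) t r m (x : R) : Prop :=
  forall a : 'I_t -> seq 'F_2, (forall i, size (a i) = (2 ^ m)%N) ->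
  exists s : 'I_t -> seq 'F_2, (forall i, s i \in rm_code m r) /\
     ((dist (2 ^ m) a s)%:R <= x)%R.

Lemma CoversS_mono (R : realType) t r m (x y : R) :
  (x <= y)%R -> CoversS t r m x -> CoversS t r m y.
Proof.
move=> le C a Ha; have [s [Hs Hd]] := C a Ha; exists s; split=> //.
exact: le_trans le.
Qed.

Lemma F2_neq_add (x u w : 'F_2) : (x != u + w) = (x + u != w)%R.
Proof.
by case: (F2_cases x) => ->; case: (F2_cases u) => ->; case: (F2_cases w) => ->.
Qed.

Lemma CoversS_full (R : realType) t r : (1 <= r)%N -> CoversS t r r (0 : R).
Proof.
move=> r1 a Ha; exists a; split; first by move=> i; apply: rm_full.
rewrite /dist (@eq_count _ _ pred0) ?count_pred0 //.
by move=> j /=; apply/existsP => -[i]; rewrite eqxx.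
Qed.

Lemma CoversS_rec (R : realType) t r m (x y : R) : (r < m)%N ->
  CoversS t r.+1 m x -> CoversS t r m y -> CoversS t r.+1 m.+1 (x + y).
Proof.
move=> rm C1 C2 a Ha.
set n := (2 ^ m)%N.
have En : (2 ^ m.+1 = n + n)%N by rewrite expnS mul2n addnn.
have Ht : forall i, size (take n (a i)) = n.
  by move=> i; rewrite size_takel // Ha En leq_addr.
have [u [Hu Du]] := C1 (fun i => take n (a i)) Ht.
pose b i := [seq p.1 + p.2 | p <- zip (drop n (a i)) (u i)]%R.
have Hb : forall i, size (b i) = n.
  by move=> i; rewrite size_map size1_zip size_drop Ha En addnK // (size_rm (Hu i)).
have [w [Hw Dw]] := C2 b Hb.
exists (fun i => uuv (u i) (w i)); split.
  move=> i /=; rewrite ltnNge in rm; rewrite (negbTE rm).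
  exact: (allpairs_f uuv (Hu i) (Hw i)).
apply: le_trans (lerD Du Dw); rewrite -natrD ler_nat.
rewrite /dist En iotaD count_cat leq_add //.
  rewrite leq_eqVlt; apply/orP; left; apply/eqP.
  apply: eq_in_count => j; rewrite mem_iota add0n => /andP[_ jn].
  apply: eq_existsb => i.
  by rewrite nth_take // /uuv nth_cat (size_rm (Hu i)) jn.
rewrite add0n -[n in iota n]addn0 iotaDl count_map.
rewrite leq_eqVlt; apply/orP; left; apply/eqP.
apply: eq_in_count => j; rewrite mem_iota add0n => /andP[_ jn] /=.
apply: eq_existsb => i.
have Sui := size_rm (Hu i); have Swi := size_rm (Hw i).
rewrite /uuv nth_cat Sui ltnNge leq_addr /= addKn.
rewrite (nth_map (0, 0)%R); last by rewrite size1_zip ?Sui ?Swi.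
rewrite /b (nth_map (0, 0)%R); last by rewrite size1_zip ?size_drop ?Ha ?En ?addnK ?Sui.
rewrite !nth_zip ?size_drop ?Ha ?En ?addnK ?Sui ?Swi //= nth_drop.
exact: F2_neq_add.
Qed.


Lemma seq_of_nth n (s : seq 'F_2) : size s = n ->
  [seq nth 0 s (val j) | j <- enum 'I_n] = s.
Proof.
move=> Hs; rewrite (map_comp (nth 0 s) val) val_enum_ord -Hs.
exact: mkseq_nth.
Qed.

Lemma cover_mx (R : realType) t r m (x : R) : CoversS t r m x ->
  forall v : 'M['F_2]_(t, 2 ^ m), exists c : 'M['F_2]_(t, 2 ^ m),
    (forall i, row i c \in RM r m) /\ ((d_t v c)%:R <= x).
Proof.
move=> C v.
pose a i := [seq v i j | j <- enum 'I_(2 ^ m)].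
have Ha : forall i, size (a i) = (2 ^ m)%N by move=> i; rewrite size_map size_enum_ord.
have [s [Hs Hd]] := C a Ha.
exists (\matrix_(i, j) nth 0 (s i) j); split.
  move=> i; rewrite inE.
  rewrite (eq_map (g := fun j : 'I_(2 ^ m) => nth 0 (s i) j)); last by move=> j; rewrite !mxE.
  by rewrite seq_of_nth ?Hs // (size_rm (Hs i)).
apply: le_trans Hd; rewrite ler_nat leq_eqVlt; apply/orP; left; apply/eqP.
rewrite /d_t /wt_t /dist cardE /enum_mem -enumT -val_enum_ord count_map.
rewrite size_filter; apply: eq_in_count => j _ /=.
rewrite inE; apply: eq_existsb => i; rewrite !mxE subr_eq0.
rewrite /a (nth_map j) ?size_enum_ord // nth_ord_enum //.
Qed.

Lemma Rt_le (R : realType) t r m (x : R) : CoversS t r m x ->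
  (R_t_RM t r m)%:R <= x.
Proof.
move=> C; have Cm := cover_mx C.
rewrite /R_t_RM /gen_cov_radius; case: ex_minnP => k Pk Hmin.
rewrite leNgt; apply/negP => Hlt.
have [c0 [_ H0]] := Cm 0.
have k1 : (0 < k)%N.
  by rewrite -(ltr_nat R); apply: le_lt_trans Hlt; apply: le_trans H0.
have : cov_pred t (RM r m) k.-1.
  apply/orP; right; apply/forallP => v; apply/existsP.
  have [c [Hc Hd]] := Cm v; exists c; apply/andP; split.
    by apply/forallP.
  rewrite -ltnS prednK // -(ltr_nat R); exact: le_lt_trans Hlt.
by move/Hmin; rewrite leqNgt; case: (k) k1 => // k0 _; rewrite ltnSn.
Qed.


Definition chi (R : realType) (b : 'F_2) : R := if b == 0 then 1 else -1.

Lemma chi0 (R : realType) : chi R 0 = 1. Proof. by rewrite /chi eqxx. Qed.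
Lemma chi1 (R : realType) : chi R 1 = -1. Proof. by rewrite /chi oner_eq0. Qed.

Lemma chiD (R : realType) x y : chi R (x + y) = chi R x * chi R y.
Proof.
by case: (F2_cases x) => ->; case: (F2_cases y) => ->;
  rewrite ?addr0 ?add0r ?chi0 ?chi1 ?mulr1 ?mul1r ?mulrNN ?mulr1 //
   -[1 + 1 : 'F_2]/0 chi0.
Qed.

Lemma chi_sq (R : realType) x : chi R x ^+ 2 = 1.
Proof. by case: (F2_cases x) => ->; rewrite ?chi0 ?chi1 ?expr1n ?sqrrN ?expr1n. Qed.

Lemma chi_eq (R : realType) x y : chi R x * chi R y = 2 * (x == y)%:R - 1.
Proof.
by case: (F2_cases x) => ->; case: (F2_cases y) => ->;
  rewrite ?chi0 ?chi1 ?eqxx ?oner_eq0 ?(eq_sym 1 0) ?oner_eq0 /=;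
  rewrite ?mulr1 ?mul1r ?mulrNN ?mulr0; lra.
Qed.

Fixpoint lin (m : nat) : seq (seq 'F_2) :=
  match m with
  | 0 => [:: [:: 0]; [:: 1]]
  | m'.+1 => [seq uuv u v | u <- lin m', v <- [:: nseq (2 ^ m') 0; nseq (2 ^ m') 1]]
  end.

Lemma linS m : lin m.+1 =
  [seq uuv u v | u <- lin m, v <- [:: nseq (2 ^ m) 0; nseq (2 ^ m) 1]].
Proof. by []. Qed.

Lemma size_lin m s : s \in lin m -> size s = (2 ^ m)%N.
Proof.
elim: m s => [|m IH] s; first by rewrite !inE => /orP[] /eqP ->.
rewrite linS; case/allpairsP => [[u v] [/= /IH Hu Hv ->]].
rewrite size_uuv ?Hu ?expnS ?mul2n ?addnn //.
by move: Hv; rewrite !inE => /orP[] /eqP ->; rewrite size_nseq.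
Qed.

Lemma size_lin_seq m : size (lin m) = (2 ^ m.+1)%N.
Proof.
elim: m => [//|m IH]; by rewrite linS size_allpairs IH /= [in RHS]expnS mulnC.
Qed.

Lemma lin_rm m s : (1 <= m)%N -> s \in lin m -> s \in rm_code m 1.
Proof.
elim: m s => [//|m IH] s _.
rewrite linS; case/allpairsP => [[u v] [/= Hu Hv ->]].
case: m IH Hu Hv => [|m] IH Hu Hv.
  apply: (@rm_full 1) => //; rewrite size_uuv ?(size_lin Hu) //.
  by move: Hv; rewrite !inE => /orP[] /eqP ->; rewrite size_nseq.
change (uuv u v \in rm_code m.+2 1); rewrite rmS //; apply/allpairsP; exists (u, v); split => //=; first exact: IH.
Qed.

Lemma lin_compl m s : s \in lin m -> [seq x + 1 | x <- s] \in lin m.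
Proof.
elim: m s => [|m IH] s.
  have E : (1 + 1 : 'F_2) = 0 by apply/val_inj.
  by rewrite !inE => /orP[] /eqP -> /=; rewrite ?add0r ?E ?eqxx ?orbT.
rewrite linS; case/allpairsP => [[u v] [/= Hu Hv ->]].
have -> : [seq x + 1 | x <- uuv u v] = uuv [seq x + 1 | x <- u] v.
  rewrite /uuv map_cat; congr (_ ++ _).
  elim: u v {Hu Hv} => [|x u IHu] [|y v] //=.
  by rewrite IHu addrAC.
exact: (allpairs_f uuv (IH _ Hu) Hv).
Qed.

Definition corr (R : realType) (f : nat -> R) n (a : seq 'F_2) : R :=
  \sum_(j <- iota 0 n) f j * chi R (nth 0 a j).

Lemma corr_uuv (R : realType) (f : nat -> R) n u e : size u = n ->
  corr f (n + n) (uuv u (nseq n e)) =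
  corr f n u + chi R e * corr (fun j => f (n + j)%N) n u.
Proof.
move=> Hu; rewrite /corr iotaD big_cat /= add0n; congr (_ + _).
  apply: eq_big_seq => j; rewrite mem_iota add0n => /andP[_ jn].
  by rewrite /uuv nth_cat Hu jn.
rewrite -[n in iota n]addn0 iotaDl big_map mulr_sumr.
apply: eq_big_seq => j; rewrite mem_iota add0n => /andP[_ jn].
rewrite /uuv nth_cat Hu ltnNge leq_addr /= addKn.
rewrite (nth_map (0, 0)); last by rewrite size1_zip ?size_nseq Hu.
rewrite nth_zip ?size_nseq //= nth_nseq jn chiD.
by rewrite mulrA mulrC.
Qed.

Lemma parseval (R : realType) m (f : nat -> R) :
  \sum_(a <- lin m) corr f (2 ^ m) a ^+ 2 =
  (2 ^ m.+1)%:R * \sum_(j <- iota 0 (2 ^ m)) f j ^+ 2.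
Proof.
elim: m f => [|m IH] f.
  rewrite /= !big_cons !big_nil /corr /= !big_cons !big_nil /= chi0 chi1.
  rewrite !addr0 mulr1 mulrN1 sqrrN expn1 -[2%:R]/(1+1) mulrDl mul1r //.
rewrite linS big_allpairs_dep /=.
have E : (2 ^ m.+1 = 2 ^ m + 2 ^ m)%N by rewrite expnS mul2n addnn.
rewrite E.
under eq_big_seq => u Hu.
  rewrite !big_cons big_nil !corr_uuv ?(size_lin Hu) // chi0 chi1.
  over.
rewrite /=.
have H : forall A B : R, (A + 1 * B) ^+ 2 + ((A + -1 * B) ^+ 2 + 0) =
   2 * A ^+ 2 + 2 * B ^+ 2.
  move=> A B; rewrite !mul1r mulN1r addr0 !sqrrD sqrrN; lra.
under eq_bigr => u _ do rewrite H.
rewrite big_split /= -!mulr_sumr !IH iotaD big_cat /= add0n.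
have iotaS : forall k, iota k k = map (addn k) (iota 0 k).
  by move=> k; rewrite -iotaDl addn0.
rewrite iotaS big_map !mulrA -mulrDr (expnS 2 m.+1) natrM.
by [].
Qed.


Lemma exists_ge (T : eqType) (R : realType) (s : seq T) (h : T -> R) c :
  s != [::] -> (size s)%:R * c <= \sum_(a <- s) h a ->
  exists2 a, a \in s & c <= h a.
Proof.
move=> sn Hs; have [/hasP[a Ha Hc]|] := boolP (has (fun a => c <= h a) s).
  by exists a.
move/hasPn => Hn; exfalso; move: Hs; apply/negP; rewrite -ltNge.
elim: s sn Hn => [//|x s IH] _ Hn.
rewrite big_cons /= -add1n natrD mulrDl mul1r.
have hx : h x < c by rewrite ltNge; apply: Hn; rewrite inE eqxx.
have [->|sn] := eqVneq s [::]; first by rewrite big_nil /= mul0r !addr0.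
apply: ltrD => //; apply: IH => // a Ha; apply: Hn; by rewrite inE Ha orbT.
Qed.

Lemma count_sum (R : realType) (T : Type) (P : pred T) (s : seq T) :
  (count P s)%:R = \sum_(x <- s) (P x)%:R :> R.
Proof. by elim: s => [|x s IH]; rewrite ?big_nil ?big_cons //= natrD IH. Qed.

Lemma agree_exists (R : realType) m (g : seq 'F_2) (S : pred nat) :
  exists2 b, b \in lin m &
  ((count S (iota 0 (2 ^ m)))%:R + Num.sqrt (count S (iota 0 (2 ^ m)))%:R) / 2
    <= (count (fun j => S j && (nth 0 g j == nth 0 b j)) (iota 0 (2 ^ m)))%:R :> R.
Proof.
set n := (2 ^ m)%N; set cS : R := (count S (iota 0 n))%:R.
pose f j : R := if S j then chi R (nth 0 g j) else 0.
pose A b : R := (count (fun j => S j && (nth 0 g j == nth 0 b j)) (iota 0 n))%:R.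
have HA : forall b, corr f n b = 2 * A b - cS.
  move=> b; rewrite /corr /A /cS !count_sum mulr_sumr -sumrB.
  apply: eq_bigr => j _; rewrite /f; case: (S j) => /=.
    by rewrite chi_eq.
  by rewrite mul0r mulr0 subr0.
have Hgoal : forall b, Num.sqrt cS <= corr f n b -> (cS + Num.sqrt cS) / 2 <= A b.
  move=> b; rewrite HA => H; lra.
have Hf : \sum_(j <- iota 0 n) f j ^+ 2 = cS.
  rewrite /cS count_sum; apply: eq_bigr => j _; rewrite /f.
  by case: (S j); rewrite ?chi_sq ?expr0n.
have [b Hb Hc] : exists2 b, b \in lin m & cS <= corr f n b ^+ 2.
  apply: exists_ge.
    by rewrite -size_eq0 size_lin_seq expn_eq0.
  by rewrite parseval Hf size_lin_seq.
have Hsq : forall z : R, cS <= z ^+ 2 -> 0 <= z -> Num.sqrt cS <= z.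
  move=> z Hz z0; rewrite -(ger0_norm z0) -sqrtr_sqr ler_sqrt //.
  exact: sqr_ge0.
have [c0|c0] := leP 0 (corr f n b).
  by exists b => //; apply: Hgoal; apply: Hsq.
exists [seq x + 1 | x <- b]; first exact: lin_compl.
apply: Hgoal.
have -> : corr f n [seq x + 1 | x <- b] = - corr f n b.
  rewrite /corr -sumrN; apply: eq_big_seq => j; rewrite mem_iota add0n => /andP[_ jn].
  rewrite (nth_map 0) ?(size_lin Hb) // chiD chi1 mulrN1 mulrN //.
apply: Hsq; first by rewrite sqrrN.
lra.
Qed.


Definition hk (R : realType) m k : R :=
  (2 ^+ m + Num.sqrt (2 ^+ k - 1) * Num.sqrt 2 ^+ m) / 2 ^+ k.

Lemma sqrt2X (R : realType) k : (Num.sqrt 2 ^+ k) ^+ 2 = 2 ^+ k :> R.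
Proof. by rewrite -exprM mulnC exprM sqr_sqrtr // ler0n. Qed.

Lemma h_step (R : realType) m k (y : R) : hk R m k <= y ->
  hk R m k.+1 <= (y + Num.sqrt y) / 2.
Proof.
rewrite /hk => Hy.
set P : R := 2 ^+ k.
have P1 : 1 <= P by rewrite /P exprn_ege1 // ler1n.
set u : R := Num.sqrt (P - 1); set w : R := Num.sqrt 2 ^+ k; set q : R := Num.sqrt 2 ^+ m.
set v : R := Num.sqrt (2 ^+ k.+1 - 1).
have u0 : 0 <= u by apply: sqrtr_ge0.
have w0 : 0 <= w by apply: exprn_ge0; apply: sqrtr_ge0.
have q0 : 0 <= q by apply: exprn_ge0; apply: sqrtr_ge0.
have v0 : 0 <= v by apply: sqrtr_ge0.
have uu : u ^+ 2 = P - 1 by rewrite sqr_sqrtr // subr_ge0.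
have ww : w ^+ 2 = P by rewrite sqrt2X.
have qq : q ^+ 2 = 2 ^+ m by rewrite sqrt2X.
have vv : v ^+ 2 = 2 * P - 1 by rewrite sqr_sqrtr // exprS ?subr_ge0 // -/P; lra.
have H3 : v <= u + w by nra.
have P0 : 0 < P by lra.
have H1 : 2 ^+ m + u * q <= P * y.
  move: Hy; rewrite ler_pdivrMr // => H; rewrite [P * y]mulrC; exact: H.
have m0 : 0 <= 2 ^+ m :> R by apply: exprn_ge0.
have uq0 : 0 <= u * q by apply: mulr_ge0.
have y0 : 0 <= y by nra.
set z := Num.sqrt y.
have z0 : 0 <= z by apply: sqrtr_ge0.
have zz : z ^+ 2 = y by rewrite sqr_sqrtr.
have H2 : q <= z * w.
  have zw0 : 0 <= z * w by apply: mulr_ge0.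
  have Hsq : q ^+ 2 <= (z * w) ^+ 2 by rewrite exprMn zz ww qq; lra.
  by move: Hsq; rewrite -ler_sqrt ?sqr_ge0 // !sqrtr_sqr !ger0_norm.
have H4 : w * q <= P * z.
  have E : P * z = w * (z * w) by rewrite -ww; ring.
  by rewrite E; apply: ler_wpM2l.
rewrite exprS -/P ler_pdivrMr; last lra.
have : q * v <= q * (u + w) by apply: ler_wpM2l.
nra.
Qed.

Lemma iter_rows (R : realType) t m (g : 'I_t -> seq 'F_2) k : (k <= t)%N ->
  exists a : 'I_t -> seq 'F_2, (forall i, a i \in lin m) /\
   hk R m k <= (count (fun j => [forall i : 'I_t, (i < k)%N ==>
                  (nth 0 (g i) j == nth 0 (a i) j)]) (iota 0 (2 ^ m)))%:R.
Proof.
elim: k => [|k IH] kt.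
  exists (fun _ => nth [::] (lin m) 0); split.
    by move=> i; apply: mem_nth; rewrite size_lin_seq expn_gt0.
  rewrite (@eq_count _ _ predT); last by move=> j; apply/forallP.
  rewrite count_predT size_iota /hk expr0 subrr sqrtr0 mul0r addr0 divr1.
  by rewrite natrX.
have [a [Ha Hc]] := IH (ltnW kt).
set S := (fun j => _) in Hc.
have [b Hb Hc2] := agree_exists R m (g (Ordinal kt)) S.
set i0 := Ordinal kt.
exists (fun i => if i == i0 then b else a i); split.
  by move=> i; case: (i == i0).
apply: le_trans (h_step Hc) _.
apply: (le_trans Hc2); rewrite ler_nat leq_eqVlt; apply/orP; left; apply/eqP.
apply: eq_count => j; rewrite /S /=; apply/idP/idP.
  case/andP => /forallP HS Hb0; apply/forallP => i; apply/implyP.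
  rewrite ltnS leq_eqVlt => /orP[/eqP ik|ik].
    have -> : i = i0 by apply: val_inj.
    by rewrite eqxx.
  have -> : (i == i0) = false.
    by apply/negP => /eqP Hi; move: ik; rewrite Hi /= ltnn.
  exact: (implyP (HS i) ik).
move/forallP => H; apply/andP; split.
  apply/forallP => i; apply/implyP => ik.
  have := implyP (H i) (ltnW ik).
  have -> : (i == i0) = false.
    by apply/negP => /eqP Hi; move: ik; rewrite Hi /= ltnn.
  by [].
by have := implyP (H i0) (ltnSn k); rewrite eqxx.
Qed.

Definition gfun (R : realType) t r m : R :=
  (1 - 1 / (2 ^+ t)) * (2 ^+ m)
      - Num.sqrt (2 ^+ t - 1) / (2 ^+ t) * (1 + Num.sqrt 2) ^+ (r.-1)
        * Num.sqrt 2 ^+ m.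

Lemma base_cover (R : realType) t m : (1 <= m)%N -> CoversS t 1 m (gfun R t 1 m).
Proof.
move=> m1 g Hg.
have [a [Ha Hc]] := iter_rows R m g (leqnn t).
exists a; split; first by move=> i; apply: lin_rm.
set C := count _ _ in Hc.
have -> : dist (2 ^ m) g a = ((2 ^ m) - C)%N.
  rewrite /C; set Q := (fun j => _).
  have E := count_predC Q (iota 0 (2 ^ m)); rewrite size_iota in E.
  rewrite -{2}E addKn /dist; apply: eq_count => j /=.
  rewrite /Q negb_forall; apply: eq_existsb => i.
  by rewrite ltn_ord.
have CS : (C <= 2 ^ m)%N by rewrite /C -[X in (_ <= X)%N](size_iota 0) count_size.
rewrite natrB // natrX.
suff : 2 ^+ m - hk R m t = gfun R t 1 m by move=> <-; lra.
rewrite /hk /gfun expr0 mulr1.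
have P0 : (2 ^+ t : R) != 0 by rewrite expf_neq0 // pnatr_eq0.
by field.
Qed.


Lemma alg_id (R : realType) (K c A s q T : R) : s * s = 2 ->
  K * (2 * T) - c * ((1 + s) * A) * (s * q) =
  (K * T - c * ((1 + s) * A) * q) + (K * T - c * A * q).
Proof.
move=> ss; apply/eqP; rewrite -subr_eq0; apply/eqP.
have -> : K * (2 * T) - c * ((1 + s) * A) * (s * q) -
  ((K * T - c * ((1 + s) * A) * q) + (K * T - c * A * q)) = - c * A * q * (s * s - 2) by ring.
by rewrite ss subrr mulr0.
Qed.

Lemma gfun_rec (R : realType) t r m : (1 <= r)%N ->
  gfun R t r.+1 m.+1 = gfun R t r.+1 m + gfun R t r m.
Proof.
case: r => [//|r] _; rewrite /gfun /= !exprS.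
apply: alg_id; rewrite -expr2 sqr_sqrtr // ler0n.
Qed.

Definition efun (R : realType) r m : R := if (2 <= r)%N then ('C(m, r - 2))%:R else 0.

Lemma main_ind (R : realType) t r : (1 <= r)%N -> exists B : R, 0 <= B /\
  forall m, (r <= m)%N -> CoversS t r m (gfun R t r m + B * efun R r m).
Proof.
elim: r => [//|r IH] _.
case: r IH => [|r] IH.
  exists 0; split=> // m Hm; rewrite mul0r addr0; exact: base_cover.
have [B [B0 HB]] := IH isT.
set B' := B + `|gfun R t r.+2 r.+2|.
have BB : B <= B' by rewrite /B' lerDl.
exists B'; split; first by apply: addr_ge0.
move=> m Hm; rewrite -(subnKC Hm); elim: (m - r.+2)%N => [|d IHd].
  rewrite addn0; apply: (CoversS_mono _ (@CoversS_full R t r.+2 isT)).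
  rewrite /efun /= subn2 /=.
  have c1 : 1 <= ('C(r.+2, r))%:R :> R.
    by rewrite ler1n bin_gt0 -addn2 leq_addr.
  have : `|gfun R t r.+2 r.+2| * 1 <= B' * ('C(r.+2, r))%:R.
    apply: ler_pM => //; first by rewrite lerDr.
  rewrite mulr1 => H; have := ler_norm (- gfun R t r.+2 r.+2); rewrite normrN.
  lra.
rewrite addnS.
have Hr : (r.+1 < r.+2 + d)%N by rewrite leq_addr.
apply: (CoversS_mono _ (CoversS_rec Hr IHd (HB _ (ltnW Hr)))).
rewrite gfun_rec //.
suff : B' * efun R r.+2 (r.+2 + d) + B * efun R r.+1 (r.+2 + d) <=
       B' * efun R r.+2 (r.+2 + d).+1 by lra.
rewrite /efun /= !subn2 /=.
clearbody B'; case: r {IH HB Hm IHd Hr} => [|r].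
  by rewrite /= !bin0 mulr0 addr0.
rewrite /= binS natrD mulrDr lerD2l; apply: ler_wpM2r => //.
Qed.


Lemma expn_mono (a b k : nat) : (a <= b)%N -> (a ^ k <= b ^ k)%N.
Proof.
move=> ab; case: k => [//|k]; by rewrite leq_exp2r.
Qed.

Lemma bin_le_exp (m k : nat) : ('C(m, k) <= m ^ k)%N.
Proof.
elim: m k => [|m IH] [|k] //.
rewrite binS.
apply: leq_trans (leq_add (IH k.+1) (IH k)) _.
rewrite [X in (_ <= X)%N]expnS [(m ^ k.+1)%N]expnS -mulSnr leq_mul2l.
by rewrite expn_mono ?orbT.
Qed.

Unset Implicit Arguments.

Theorem theorem11 (R : realType) (t r : nat) :
  (1 <= t)%N -> (1 <= r)%N ->
  exists (K : R) (M : nat), forall m : nat, (M <= m)%N -> (r <= m)%N ->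
    ((R_t_RM t r m)%:R : R) <=
      (1 - 1 / (2 ^+ t)) * (2 ^+ m)
      - Num.sqrt (2 ^+ t - 1) / (2 ^+ t) * (1 + Num.sqrt 2) ^+ (r.-1)
        * Num.sqrt 2 ^+ m
      + K * (m%:R) ^ (r%:Z - 2).
Proof.
move=> _ r1; have [B [B0 HB]] := main_ind R t r1.
exists B, 0%N => m _ Hm.
apply: le_trans (Rt_le (HB m Hm)) _.
apply: (lerD (lexx _)); apply: ler_wpM2l => //.
rewrite /efun; case: ifP => r2.
  have -> : (r%:Z - 2 = (r - 2)%N%:Z)%R by rewrite subzn.
  by rewrite -exprnP -natrX ler_nat bin_le_exp.
by apply: exprz_ge0; rewrite ler0n.
Qed.
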